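(* Let $q$ be a power of $2$ and $k\ge1$ an integer. Let $L\in\mathbb{F}_{q^{3k}}[x]$ be a $2$-linearized polynomial (i.e. $L=\sum_i c_i x^{2^i}$ with $c_i\in\mathbb{F}_{q^{3k}}$) such that (i) $L$ permutes $\mathbb{F}_{q^k}$ (in particular maps $\mathbb{F}_{q^k}$ bijectively onto itself), and (ii) $L+L^{q^{2k}}\equiv S_{2k}^2+S_{2k}^{2q^{k+1}}\pmod{x^{q^{3k}}-x}$. Then $L+S_{2k}^{q^k+1}$ is a permutation polynomial of $\mathbb{F}_{q^{3k}}$.
   Context: $\mathbb{F}_Q$ is the finite field with $Q$ elements. For a power $q$ of $2$ and positive integer $m$, $S_m=x+x^q+\cdots+x^{q^{m-1}}\in\mathbb{F}_2[x]$; exponents on $S_m$ and $L$ denote powers of polynomials (so $L^{q^{2k}}$ is the $q^{2k}$-th power of $L$). A polynomial $f$ is a permutation polynomial of $\mathbb{F}_Q$ if $c\mapsto f(c)$ is a bijection of $\mathbb{F}_Q$. *)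

(* Defs.v *)
From HB Require Import structures.
From mathcomp Require Import all_boot all_order all_algebra all_field.
Set Implicit Arguments. Unset Strict Implicit. Unset Printing Implicit Defensive.
Import GRing.Theory.
Local Open Scope ring_scope.

Definition S_poly (F : fieldType) (q m : nat) : {poly F} :=
  \sum_(i < m) 'X^(q ^ i).

Definition two_linearized (F : fieldType) (L : {poly F}) : Prop :=
  exists (n : nat) (c : nat -> F), L = \sum_(i < n) c i *: 'X^(2 ^ i).

(* the subfield F_{q^k} of F: elements fixed by x |-> x^{q^k} *)
Definition in_subfield (F : fieldType) (Qk : nat) (a : F) : bool :=
  a ^+ Qk == a.

(* L permutes the subfield {a | a^Qk = a}: maps it into itself, injectively
   (hence bijectively, the subfield being finite) *)
Definition permutes_subfield (F : fieldType) (Qk : nat) (L : {poly F}) : Prop :=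
  (forall a, in_subfield Qk a -> in_subfield Qk L.[a]) /\
  (forall a b, in_subfield Qk a -> in_subfield Qk b -> L.[a] = L.[b] -> a = b).

Definition is_perm_poly (F : finFieldType) (p : {poly F}) : Prop :=
  bijective (fun c : F => p.[c]).

(* Main.v *)
Require Import Defs.
From HB Require Import structures.
From mathcomp Require Import all_boot all_order all_algebra all_field.
From mathcomp Require Import zify ring.
Import GRing.Theory.
Local Open Scope ring_scope.

Section H.
Variable F : fieldType.
Hypothesis h2 : 2 \in [pchar F].

Lemma pn2 (j : nat) : [pchar F].-nat (2 ^ j)%N.
Proof. by rewrite pnatX (eq_pnat _ (pcharf_eq h2)) pnat_id. Qed.

Lemma frobD n (a b : F) : [pchar F].-nat n -> (a + b) ^+ n = a ^+ n + b ^+ n.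
Proof. exact: exprDn_pchar. Qed.

Lemma frob_sum (I : Type) (r : seq I) (P : pred I) (G : I -> F) N :
  [pchar F].-nat N ->
  (\sum_(i <- r | P i) G i) ^+ N = \sum_(i <- r | P i) G i ^+ N.
Proof.
move=> hN; apply: (big_morph (fun y => y ^+ N)).
  by move=> a b; rewrite frobD.
by rewrite expr0n; case: N hN.
Qed.

Lemma telesc n (g : nat -> F) :
  \sum_(i < n) g i + \sum_(i < n) g i.+1 = g 0%N + g n.
Proof.
elim: n => [|n IH]; first by rewrite !big_ord0 addr0 addrr_pchar2.
rewrite !big_ord_recr /= addrACA IH -addrA; congr (_ + _).
by rewrite addrA addrr_pchar2 ?add0r.
Qed.
End H.

Theorem theorem4p1 (F : finFieldType) (e k : nat) (L : {poly F}) :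
  (0 < e)%N -> (0 < k)%N ->
  #|F| = ((2 ^ e) ^ (3 * k))%N ->
  two_linearized L ->
  permutes_subfield ((2 ^ e) ^ k)%N L ->
  ('X^#|F| - 'X) %| ((L + L ^+ ((2 ^ e) ^ (2 * k))) -
     (S_poly F (2 ^ e) (2 * k) ^+ 2
      + S_poly F (2 ^ e) (2 * k) ^+ (2 * (2 ^ e) ^ k.+1))) ->
  is_perm_poly (L + S_poly F (2 ^ e) (2 * k) ^+ ((2 ^ e) ^ k + 1)).
Proof.
move=> e0 k0 HF [n [c HL]] [Lin Linj] Hdiv.
have h2 : 2 \in [pchar F].
  by apply: (card_finPcharP (p:=2) (n:=(e * (3 * k))%N)); [rewrite HF -expnM|].
set q := (2 ^ e)%N in HF Hdiv Lin Linj *.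
set m := (q ^ k)%N in Lin Linj *.
have pnq i : [pchar F].-nat (q ^ i)%N by rewrite /q -expnM pn2.
have pnm : [pchar F].-nat m by apply: pnq.
have pnmm : [pchar F].-nat (m * m)%N by rewrite pnatM pnm.
have e2 : (q ^ (2 * k) = m * m)%N by rewrite /m -expnD; congr expn; lia.
have hcard : #|F| = (m * m * m)%N by rewrite HF /m -!expnD; congr expn; lia.
have Fq (a : F) : a ^+ (m * m * m)%N = a by rewrite -hcard expf_card.
have m0 : (0 < m)%N by rewrite expn_gt0 expn_gt0.
have LD a b : L.[a + b] = L.[a] + L.[b].
  rewrite HL !horner_sum -big_split; apply: eq_bigr => i _ /=.
  by rewrite !hornerZ !hornerXn frobD ?pn2 // mulrDr.
have L0 : L.[0] = 0 by have := LD 0 0; rewrite addr0 addrr_pchar2.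
pose s x := (S_poly F q (2 * k)).[x].
have sE x : s x = \sum_(i < 2 * k) x ^+ (q ^ i).
  by rewrite /s /S_poly horner_sum; apply: eq_bigr => i _; rewrite hornerXn.
have sD a b : s (a + b) = s a + s b.
  by rewrite !sE -big_split; apply: eq_bigr => i _; rewrite frobD.
have e3 : (q ^ (3 * k) = m * m * m)%N by rewrite /m -!expnD; congr expn; lia.
have strace x : s x + s x ^+ m + s x ^+ (m * m)%N = 0.
  pose g j := x ^+ (q ^ j)%N.
  have gP j : g (j + 3 * k)%N = g j by rewrite /g expnD exprM e3 Fq.
  have gS c0 : \sum_(i < 2 * k) g (i + c0)%N =
      \sum_(i < k) g (i + c0)%N + \sum_(i < k) g (i + (k + c0))%N.
    rewrite (_ : (2 * k)%N = (k + k)%N); last lia.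
    rewrite big_split_ord /=; congr (_ + _); apply: eq_bigr => i _ /=.
    by congr g; lia.
  have s0 : s x = \sum_(i < 2 * k) g (i + 0)%N.
    by rewrite sE; apply: eq_bigr => i _; rewrite addn0.
  have s1 : s x ^+ m = \sum_(i < 2 * k) g (i + k)%N.
    rewrite sE frob_sum //; apply: eq_bigr => i _.
    by rewrite /g -exprM /m -expnD.
  have s2 : s x ^+ (m * m)%N = \sum_(i < 2 * k) g (i + 2 * k)%N.
    rewrite sE frob_sum //; apply: eq_bigr => i _.
    by rewrite /g -exprM -e2 -expnD.
  rewrite s1 s2 s0 !gS.
  have -> : \sum_(i < k) g (i + (k + 2 * k))%N = \sum_(i < k) g (i + 0)%N.
    apply: eq_bigr => i _; rewrite -[RHS]gP; congr g; lia.
  have -> : (k + 0 = k)%N by lia.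
  have -> : (k + k = 2 * k)%N by lia.
  set a := \sum_(i < k) _; set b := \sum_(i < k) _; set c' := \sum_(i < k) _.
  have -> : a + b + (b + c') + (c' + a) = (a + a) + (b + b) + (c' + c') by ring.
  by rewrite !addrr_pchar2 ?addr0.
have eS : (q ^ k.+1 = q * m)%N by rewrite expnS.
have Hev x : L.[x] + L.[x] ^+ (m * m)%N = s x ^+ 2 + s x ^+ (2 * (q * m))%N.
  move/dvdpP: Hdiv => [r Hr]; rewrite e2 eS in Hr.
  have := congr1 (fun p => p.[x]) Hr; rewrite /= hornerM !hornerE expf_card.
  by rewrite subrr mulr0 => /eqP; rewrite subr_eq0 => /eqP.
pose f x := L.[x] + s x ^+ (m + 1)%N.
have Hf x : f x + f x ^+ (m * m)%N = s x ^+ (2 * (q * m))%N.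
  have hA : s x ^+ (m * m)%N = s x + s x ^+ m.
    by have := strace x; rewrite addrC => /eqP; rewrite addr_eq0 oppr_pchar2 // => /eqP.
  have -> : f x + f x ^+ (m * m)%N =
      (L.[x] + L.[x] ^+ (m * m)%N) + s x ^+ 2 + (s x * s x ^+ m + s x * s x ^+ m).
    rewrite /f frobD // -exprM mulnDl mul1n !exprD mulnA Fq hA expr1.
    ring.
  by rewrite Hev addrr_pchar2 // addr0 addrAC addrr_pchar2 // add0r.
have pn2qm : [pchar F].-nat (2 * (q * m))%N by rewrite !pnatM pnm andbT -[2%N]expn1 /q !pn2.
rewrite /is_perm_poly; apply: injF_bij => x y /=.
rewrite !hornerD !horner_exp -/(s x) -/(s y) -/(f x) -/(f y) => Hxy.
have HA : s x ^+ (2 * (q * m))%N = s y ^+ (2 * (q * m))%N by rewrite -!Hf Hxy.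
have Hs : s (x + y) = 0.
  have : (s x + s y) ^+ (2 * (q * m))%N = 0 by rewrite frobD // HA addrr_pchar2.
  by move/eqP; rewrite sD expf_eq0 => /andP[_ /eqP].
have sxy : s x = s y.
  by move: Hs; rewrite sD => /eqP; rewrite addr_eq0 oppr_pchar2 // => /eqP.
set d := x + y in Hs.
have hd : d ^+ (q ^ (2 * k))%N = d.
  have := @telesc F h2 (2 * k) (fun j => d ^+ (q ^ j)%N).
  have -> : \sum_(i < 2 * k) d ^+ (q ^ i.+1)%N = s d ^+ q.
    rewrite sE frob_sum //; last by rewrite /q pn2.
    by apply: eq_bigr => i _; rewrite -exprM expnSr.
  rewrite -sE Hs expr0n eqn0Ngt expn_gt0 /= add0r expr1.
  by move/eqP; rewrite eq_sym addr_eq0 oppr_pchar2 // => /eqP.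
have dK : in_subfield m d.
  by rewrite /in_subfield -{1}hd e2 -exprM Fq.
have Ld : L.[d] = L.[0].
  rewrite L0 /d LD; move: Hxy; rewrite /f sxy => /addIr ->.
  by rewrite addrr_pchar2.
have := Linj _ _ dK _ Ld.
rewrite /in_subfield expr0n eqn0Ngt m0 /= eqxx => /(_ isT) /eqP.
by rewrite /d addr_eq0 oppr_pchar2 // => /eqP.
Qed.
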